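(* Let $\Gamma$ be a hyperbolic group with finite generating set $S$ and let $A$ be a subgroup of $\Gamma$ containing a free subgroup of rank two. There are $\alpha\geqslant0$ and $a_1,a_2\in A$ such that $$|\gamma|_S\leqslant 3\max\{l_S(\gamma),l_S(a_1\gamma),l_S(a_2\gamma)\}+\alpha\quad\text{for all }\gamma\in\Gamma.$$
   Context: $|\gamma|_S$ is the word length and $l_S(\gamma)=\min_{g\in\Gamma}|g\gamma g^{-1}|_S$ the translation length of $\gamma$ on the Cayley graph $C_S(\Gamma)$. *)

(* Defs.v *)
From Stdlib Require Import Reals List ClassicalEpsilon.
Set Implicit Arguments.

Record Grp := {
  carrier :> Type;
  gmul : carrier -> carrier -> carrier;
  ginv : carrier -> carrier;
  gone : carrier;
  gmulA : forall x y z, gmul x (gmul y z) = gmul (gmul x y) z;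
  gmul1 : forall x, gmul gone x = x;
  gmulV : forall x, gmul (ginv x) x = gone
}.
Arguments gmul {_}.
Arguments ginv {_}.

Local Open Scope R_scope.
Section GroupDefs.
Variable G : Grp.
Variable S : list G.

Definition wprod (w : list G) : G := fold_right (@gmul G) (@gone G) w.

Definition is_word (w : list G) : Prop :=
  Forall (fun x => In x S \/ In (ginv x) S) w.

Definition generates : Prop :=
  forall g : G, exists w, is_word w /\ wprod w = g.

Definition is_least (P : nat -> Prop) (n : nat) : Prop :=
  P n /\ forall m, P m -> (n <= m)%nat.

Definition word_length (g : G) : nat :=
  epsilon (inhabits 0%nat)
    (is_least (fun n => exists w, is_word w /\ length w = n /\ wprod w = g)).

Definition transl_length (g : G) : nat :=
  epsilon (inhabits 0%nat)
    (is_least (fun n => exists h : G,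
        word_length (gmul (gmul h g) (ginv h)) = n)).

(* word metric (metric of the Cayley graph restricted to vertices) *)
Definition word_dist (x y : G) : R := INR (word_length (gmul (ginv x) y)).

Definition gromov_prod (w x y : G) : R :=
  (word_dist w x + word_dist w y - word_dist x y) / 2.

Definition hyperbolic_wrt : Prop :=
  exists delta : R, 0 <= delta /\
    forall w x y z : G,
      gromov_prod w x z >= Rmin (gromov_prod w x y) (gromov_prod w y z) - delta.
End GroupDefs.

Definition is_subgroup (G : Grp) (A : G -> Prop) : Prop :=
  A (gone G) /\ (forall x y, A x -> A y -> A (gmul x y)) /\
  (forall x, A x -> A (ginv x)).

(* reduced words in two letters: (which generator, sign) *)
Fixpoint reduced2 (w : list (bool * bool)) : Prop :=
  match w with
  | x :: ((y :: _) as t) => ~ (fst x = fst y /\ snd x <> snd y) /\ reduced2 t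
  | _ => True
  end.

Definition eval2 (G : Grp) (a b : G) (w : list (bool * bool)) : G :=
  @wprod G (map (fun l : bool * bool =>
     let x := if fst l then a else b in if snd l then x else ginv x) w).

Definition free_pair (G : Grp) (a b : G) : Prop :=
  forall w, w <> nil -> reduced2 w -> @eval2 G a b w <> gone G.

Definition contains_free_rank2 (G : Grp) (A : G -> Prop) : Prop :=
  exists a b, A a /\ A b /\ @free_pair G a b.

Arguments generates {G} S.
Arguments hyperbolic_wrt {G} S.
Arguments word_length {G} S g.
Arguments transl_length {G} S g.
Arguments is_subgroup {G} A.
Arguments contains_free_rank2 {G} A.

(* Submission.v *)
Require Import Defs.
From Stdlib Require Import Reals List Lia ZArith ClassicalEpsilon Classical Wf_nat Lra.
Set Implicit Arguments.

Section Grp1.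
Context {G : Grp}.
Local Notation "x ** y" := (@gmul G x y) (at level 40, left associativity).
Local Notation one := (gone G).
Local Notation inv := (@ginv G).

Lemma mulA x y z : x ** (y ** z) = x ** y ** z. Proof. apply gmulA. Qed.
Lemma mul1 x : one ** x = x. Proof. apply gmul1. Qed.
Lemma mulV x : inv x ** x = one. Proof. apply gmulV. Qed.
Lemma mulKV x y : inv x ** (x ** y) = y.
Proof. rewrite mulA, mulV, mul1; reflexivity. Qed.
Lemma mulr1_aux x : inv (inv x) ** one = x.
Proof. rewrite <- (mulV x), mulA, mulV, mul1. reflexivity. Qed.
Lemma mulr1 x : x ** one = x.
Proof.
  rewrite <- (mulr1_aux x) at 1. rewrite <- mulA, mul1. apply mulr1_aux.
Qed.
Lemma invK x : inv (inv x) = x.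
Proof. transitivity (inv (inv x) ** one). symmetry; apply mulr1. apply mulr1_aux. Qed.
Lemma mulrV x : x ** inv x = one.
Proof. rewrite <- (invK x) at 1. apply mulV. Qed.
Lemma mulVK x y : x ** (inv x ** y) = y.
Proof. rewrite mulA, mulrV, mul1; reflexivity. Qed.
Lemma mulKr x y : x ** y ** inv y = x.
Proof. rewrite <- mulA, mulrV, mulr1; reflexivity. Qed.
Lemma mulKrV x y : x ** inv y ** y = x.
Proof. rewrite <- mulA, mulV, mulr1; reflexivity. Qed.
Lemma inv_uniq x y : x ** y = one -> inv x = y.
Proof. intro H. rewrite <- (mulr1 (inv x)), <- H, mulKV. reflexivity. Qed.
Lemma invM x y : inv (x ** y) = inv y ** inv x.
Proof. apply inv_uniq. rewrite <- mulA, (mulA y), mulrV, mul1, mulrV. reflexivity. Qed.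
Lemma inv1 : inv one = one.
Proof. apply inv_uniq. apply mul1. Qed.
Lemma mul_cancel_l x y z : x ** y = x ** z -> y = z.
Proof. intro H. rewrite <- (mulKV x y), H, mulKV. reflexivity. Qed.
Lemma mul_cancel_r x y z : y ** x = z ** x -> y = z.
Proof. intro H. rewrite <- (mulKr y x), H, mulKr. reflexivity. Qed.

Fixpoint gpow (g : G) (n : nat) : G :=
  match n with 0 => one | S n => g ** gpow g n end.

Lemma gpow_add g m n : gpow g (m + n) = gpow g m ** gpow g n.
Proof. induction m; simpl. rewrite mul1; auto. rewrite IHm, mulA; auto. Qed.
Lemma gpow_S' g n : gpow g (S n) = gpow g n ** g.
Proof. replace (S n) with (n + 1)%nat by lia. rewrite gpow_add. simpl. rewrite mulr1. auto. Qed.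
Lemma gpow_inv g n : gpow (inv g) n = inv (gpow g n).
Proof. induction n; simpl. rewrite inv1; auto. rewrite IHn, <- invM, <- gpow_S'. reflexivity. Qed.
Lemma gpow_conj h g n : gpow (h ** g ** inv h) n = h ** gpow g n ** inv h.
Proof.
  induction n; simpl. rewrite mulr1, mulrV; auto.
  rewrite IHn. rewrite <- !mulA. rewrite (mulA (inv h) h), mulV, mul1. reflexivity.
Qed.
Lemma gpow_comm g n : g ** gpow g n = gpow g n ** g.
Proof. rewrite <- gpow_S'. reflexivity. Qed.
Lemma gpow_mul g m n : gpow g (m * n) = gpow (gpow g m) n.
Proof. induction n; simpl. rewrite Nat.mul_0_r; auto.
  replace (m * S n)%nat with (m + m * n)%nat by lia. rewrite gpow_add, IHn; auto. Qed.
Lemma gpow1 g : gpow g 1 = g. Proof. simpl. apply mulr1. Qed.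
Lemma gpow2 g : gpow g 2 = g ** g. Proof. simpl. rewrite mulr1. auto. Qed.

End Grp1.

Lemma least_exists (P : nat -> Prop) : (exists n, P n) -> exists n, is_least P n.
Proof.
  intro H. destruct (dec_inh_nat_subset_has_unique_least_element P (fun n => classic (P n)) H)
    as [n [[Hn Hmin] _]]. exists n. split; auto.
Qed.

Section WL.
Context {G : Grp}.
Variable S : list G.
Hypothesis gen : generates S.
Local Notation "x ** y" := (@gmul G x y) (at level 40, left associativity).
Local Notation one := (gone G).
Local Notation inv := (@ginv G).
Local Notation wl := (word_length S).
Local Notation tl := (transl_length S).

Lemma wl_spec g : is_least (fun n => exists w, is_word G S w /\ length w = n /\ wprod G w = g) (wl g).
Proof.
  unfold word_length. apply epsilon_spec. apply least_exists.
  destruct (gen g) as [w [H1 H2]]. exists (length w), w. auto.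
Qed.

Lemma wl_word g : exists w, is_word G S w /\ length w = wl g /\ wprod G w = g.
Proof. apply (proj1 (wl_spec g)). Qed.

Lemma wl_le w : is_word G S w -> (wl (wprod G w) <= length w)%nat.
Proof. intro H. apply (proj2 (wl_spec (wprod G w))). exists w; auto. Qed.

Lemma wprod_app (w1 w2 : list G) : wprod G (w1 ++ w2) = wprod G w1 ** wprod G w2.
Proof. induction w1; simpl. rewrite mul1; auto. rewrite IHw1, mulA; auto. Qed.

Lemma wl_one : wl one = 0%nat.
Proof. assert (H := wl_le (w:=nil)). simpl in H. assert (wl one <= 0)%nat by (apply H; constructor). lia. Qed.

Lemma wl_mul x y : (wl (x ** y) <= wl x + wl y)%nat.
Proof.
  destruct (wl_word x) as [w1 [A1 [B1 C1]]]. destruct (wl_word y) as [w2 [A2 [B2 C2]]].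
  assert (H := wl_le (w := w1 ++ w2)). rewrite wprod_app, C1, C2, length_app in H.
  rewrite <- B1, <- B2. apply H. apply Forall_app; auto.
Qed.

Lemma wl_inv_le x : (wl (inv x) <= wl x)%nat.
Proof.
  destruct (wl_word x) as [w [A [B C]]].
  assert (E : wprod G (rev (map inv w)) = inv (wprod G w)).
  { clear A B C. induction w; simpl. rewrite inv1; auto.
    rewrite wprod_app, IHw. simpl. rewrite mulr1, invM. auto. }
  assert (H := wl_le (w := rev (map inv w))). rewrite E, C, length_rev, length_map in H.
  rewrite <- B. apply H. unfold is_word in *. apply Forall_rev. apply Forall_map.
  eapply Forall_impl; [| exact A]. simpl. intros a [Ha|Ha]; [right; rewrite invK|left]; auto.
Qed.

Lemma wl_inv x : wl (inv x) = wl x.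
Proof. apply Nat.le_antisymm. apply wl_inv_le. rewrite <- (invK x) at 1. apply wl_inv_le. Qed.

Lemma wl_split g k : (k <= wl g)%nat -> exists r, wl r = k /\ wl (inv r ** g) = (wl g - k)%nat.
Proof.
  intro Hk. destruct (wl_word g) as [w [A [B C]]].
  exists (wprod G (firstn k w)).
  assert (E : inv (wprod G (firstn k w)) ** g = wprod G (skipn k w)).
  { rewrite <- C. rewrite <- (firstn_skipn k w) at 2. rewrite wprod_app, mulKV. auto. }
  rewrite E.
  assert (W1 : is_word G S (firstn k w)). { unfold is_word in *. rewrite <- (firstn_skipn k w) in A. apply Forall_app in A. tauto. }
  assert (W2 : is_word G S (skipn k w)). { unfold is_word in *. rewrite <- (firstn_skipn k w) in A. apply Forall_app in A. tauto. }
  assert (H1 := wl_le W1). assert (H2 := wl_le W2).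
  rewrite length_firstn in H1. rewrite length_skipn in H2.
  assert (H3 := wl_mul (wprod G (firstn k w)) (wprod G (skipn k w))).
  rewrite <- wprod_app, firstn_skipn, C in H3. lia.
Qed.

Definition letters := S ++ map inv S.
Fixpoint wle (n : nat) : list (list G) :=
  match n with
  | 0 => nil :: nil
  | Datatypes.S n => nil :: flat_map (fun s => map (cons s) (wle n)) letters
  end.

Lemma in_wle n w : is_word G S w -> (length w <= n)%nat -> In w (wle n).
Proof.
  revert w; induction n; intros w Hw Hl.
  - destruct w; simpl in *; [auto | lia].
  - destruct w as [|s w]; simpl; [auto|]. right.
    apply in_flat_map. inversion Hw; subst. exists s. split.
    + unfold letters. apply in_or_app. destruct H1; [left; auto | right].
      rewrite <- (invK s). apply in_map. auto.
    + apply in_map. apply IHn; auto. simpl in Hl; lia.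
Qed.

Definition ball r := map (wprod G) (wle r).

Lemma in_ball g r : (wl g <= r)%nat -> In g (ball r).
Proof.
  intro H. destruct (wl_word g) as [w [A [B C]]]. unfold ball. rewrite <- C.
  apply in_map. apply in_wle; auto. lia.
Qed.

Lemma tl_spec0 g : is_least (fun n => exists h, wl (h ** g ** inv h) = n) (tl g).
Proof.
  unfold transl_length. apply epsilon_spec. apply least_exists.
  exists (wl (one ** g ** inv one)), one. auto.
Qed.
Lemma tl_spec g : exists h, wl (h ** g ** inv h) = tl g.
Proof. apply (proj1 (tl_spec0 g)). Qed.
Lemma tl_le g h : (tl g <= wl (h ** g ** inv h))%nat.
Proof. apply (proj2 (tl_spec0 g)). exists h; auto. Qed.
Lemma tl_le_wl g : (tl g <= wl g)%nat.
Proof. assert (H := tl_le g one). rewrite inv1, mul1, mulr1 in H. auto. Qed.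
Lemma tl_conj g h : tl (h ** g ** inv h) = tl g.
Proof.
  apply Nat.le_antisymm.
  - destruct (tl_spec g) as [k Hk]. rewrite <- Hk.
    assert (H := tl_le (h ** g ** inv h) (k ** inv h)).
    replace (k ** inv h ** (h ** g ** inv h) ** inv (k ** inv h)) with (k ** g ** inv k) in H; auto.
    rewrite invM, invK. rewrite <- !mulA. rewrite mulKV. rewrite (mulA (inv h) h), mulV, mul1. auto.
  - destruct (tl_spec (h ** g ** inv h)) as [k Hk]. rewrite <- Hk.
    assert (H := tl_le g (k ** h)).
    replace (k ** h ** g ** inv (k ** h)) with (k ** (h ** g ** inv h) ** inv k) in H; auto.
    rewrite invM. rewrite <- !mulA. auto.
Qed.

End WL.

Section Dist.
Context {G : Grp}.
Variable S : list G.
Hypothesis gen : generates S.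
Local Notation "x ** y" := (@gmul G x y) (at level 40, left associativity).
Local Notation one := (gone G).
Local Notation inv := (@ginv G).
Local Notation wl := (word_length S).
Local Notation tl := (transl_length S).

Definition dd (x y : G) : nat := wl (inv x ** y).
Definition dz (x y : G) : Z := Z.of_nat (dd x y).
Definition Pz (w x y : G) : Z := (dz w x + dz w y - dz x y)%Z.

Lemma dd_sym x y : dd x y = dd y x.
Proof. unfold dd. rewrite <- wl_inv, invM, invK; auto. Qed.
Lemma dd_tri x y z : (dd x z <= dd x y + dd y z)%nat.
Proof. unfold dd. replace (inv x ** z) with ((inv x ** y) ** (inv y ** z)).
  apply wl_mul; auto. rewrite <- mulA, mulVK. auto. Qed.
Lemma dd_tr h x y : dd (h ** x) (h ** y) = dd x y.
Proof. unfold dd. rewrite invM, <- mulA, mulKV. auto. Qed.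
Lemma dd_one x : dd one x = wl x.
Proof. unfold dd. rewrite inv1, mul1. auto. Qed.
Lemma dd_refl x : dd x x = 0%nat.
Proof. unfold dd. rewrite mulV. apply wl_one; auto. Qed.
Lemma dd_base w x : dd w x = wl (inv w ** x).
Proof. reflexivity. Qed.

Lemma dz_sym x y : dz x y = dz y x. Proof. unfold dz; rewrite dd_sym; auto. Qed.
Lemma dz_tri x y z : (dz x z <= dz x y + dz y z)%Z.
Proof. unfold dz. assert (H := dd_tri x y z). lia. Qed.
Lemma dz_tr h x y : dz (h ** x) (h ** y) = dz x y. Proof. unfold dz; rewrite dd_tr; auto. Qed.
Lemma dz_nn x y : (0 <= dz x y)%Z. Proof. unfold dz; lia. Qed.
Lemma dz_refl x : dz x x = 0%Z. Proof. unfold dz; rewrite dd_refl; auto. Qed.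

Lemma Pz_tr h w x y : Pz (h ** w) (h ** x) (h ** y) = Pz w x y.
Proof. unfold Pz. rewrite !dz_tr. auto. Qed.
Lemma Pz_base w x y : Pz w x y = Pz one (inv w ** x) (inv w ** y).
Proof. rewrite <- (Pz_tr (inv w)). rewrite mulV. auto. Qed.
Lemma Pz_sym w x y : Pz w x y = Pz w y x.
Proof. unfold Pz. rewrite (dz_sym x y). lia. Qed.
Lemma Pz_ident x y z : (Pz x y z + Pz y x z = 2 * dz x y)%Z.
Proof. unfold Pz. rewrite (dz_sym y x). lia. Qed.
Lemma Pz_nn w x y : (0 <= Pz w x y)%Z.
Proof. unfold Pz. assert (H := dz_tri x w y). rewrite (dz_sym x w) in H. lia. Qed.
Lemma Pz_le w x y : (Pz w x y <= 2 * dz w x)%Z.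
Proof. unfold Pz. assert (H := dz_tri w x y). lia. Qed.
Lemma Pz_bc p q x y : (Pz p x y <= Pz q x y + 2 * dz p q)%Z.
Proof. unfold Pz. assert (H1 := dz_tri p q x). assert (H2 := dz_tri p q y). lia. Qed.
Lemma Pz_lip w x y y' : (Pz w x y <= Pz w x y' + 2 * dz y y')%Z.
Proof. unfold Pz. assert (H1 := dz_tri w y' y). assert (H2 := dz_tri x y y').
  rewrite (dz_sym y' y) in *. lia. Qed.
Lemma Pz_self w x : Pz w w x = 0%Z.
Proof. unfold Pz. rewrite dz_refl. lia. Qed.
Lemma Pz_self2 w x : Pz w x w = 0%Z.
Proof. rewrite Pz_sym. apply Pz_self. Qed.

Lemma dz_one x : dz one x = Z.of_nat (wl x). Proof. unfold dz; rewrite dd_one; auto. Qed.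

Lemma hyp_int : hyperbolic_wrt S -> exists D : nat, forall w x y z,
  (Z.min (Pz w x y) (Pz w y z) <= Pz w x z + 2 * Z.of_nat D)%Z.
Proof.
  intros [delta [Hd H]].
  destruct (archimed delta) as [Hu _].
  exists (Z.to_nat (up delta)). intros w x y z.
  assert (Hup : (0 <= up delta)%Z). { apply le_IZR. lra. }
  rewrite Z2Nat.id by auto.
  specialize (H w x y z). unfold gromov_prod, word_dist in H.
  assert (E : forall a b, INR (word_length S (inv a ** b)) = IZR (dz a b)).
  { intros. unfold dz, dd. rewrite INR_IZR_INZ. auto. }
  rewrite !E in H.
  unfold Pz.
  destruct (Z_le_gt_dec (Z.min (dz w x + dz w y - dz x y) (dz w y + dz w z - dz y z))
     (dz w x + dz w z - dz x z + 2 * up delta)) as [ok|bad]; auto.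
  exfalso.
  assert (B1 : (dz w x + dz w z - dz x z + 2 * up delta + 1 <= dz w x + dz w y - dz x y)%Z) by lia.
  assert (B2 : (dz w x + dz w z - dz x z + 2 * up delta + 1 <= dz w y + dz w z - dz y z)%Z) by lia.
  apply IZR_le in B1. apply IZR_le in B2.
  rewrite !plus_IZR, !minus_IZR, !mult_IZR, !plus_IZR in B1, B2.
  unfold Rmin in H. destruct (Rle_dec _ _); simpl in *; lra.
Qed.

End Dist.

Section Free.
Context {G : Grp}.
Local Notation "x ** y" := (@gmul G x y) (at level 40, left associativity).
Local Notation one := (gone G).
Local Notation inv := (@ginv G).

Definition compat (x y : bool * bool) := ~ (fst x = fst y /\ snd x <> snd y).

Lemma reduced2_cons x l : reduced2 (x :: l) <->
  (match l with nil => True | y :: _ => compat x y end) /\ reduced2 l.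
Proof. destruct l; simpl; unfold compat; tauto. Qed.

Lemma reduced2_rep x n l : reduced2 l -> (match l with nil => True | y :: _ => compat x y end) ->
  reduced2 (repeat x n ++ l).
Proof.
  intros Hl Hc. induction n; simpl; auto.
  apply reduced2_cons. split; auto.
  destruct n; simpl; auto. unfold compat; tauto.
Qed.

Lemma eval2_app a b w1 w2 : eval2 G a b (w1 ++ w2) = eval2 G a b w1 ** eval2 G a b w2.
Proof. unfold eval2. rewrite map_app. apply wprod_app. Qed.

Lemma eval2_rep a b x n : eval2 G a b (repeat x n) =
  gpow (let z := if fst x then a else b in if snd x then z else inv z) n.
Proof. induction n; simpl; auto. unfold eval2 in *. simpl. rewrite IHn. auto. Qed.

Lemma free_pow a b : free_pair G a b -> forall n, gpow a (S n) <> one.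
Proof.
  intros F n E. apply (F (repeat (true, true) (S n))).
  - discriminate.
  - rewrite <- (app_nil_r (repeat (true, true) (S n))). apply reduced2_rep; simpl; auto.
  - rewrite eval2_rep. simpl. simpl in E. auto.
Qed.

Lemma free_comm a b : free_pair G a b -> forall m s,
  gpow b (S m) ** gpow a (S s) <> gpow a (S s) ** gpow b (S m).
Proof.
  intros F m s E.
  apply (F (repeat (false, true) (S m) ++ repeat (true, true) (S s) ++
            repeat (false, false) (S m) ++ repeat (true, false) (S s))).
  - destruct m; discriminate.
  - apply reduced2_rep; [| simpl; unfold compat; simpl; intuition discriminate].
    apply reduced2_rep; [| simpl; unfold compat; simpl; intuition discriminate].
    apply reduced2_rep; [| simpl; unfold compat; simpl; intuition discriminate].
    rewrite <- (app_nil_r (repeat (true, false) (S s))). apply reduced2_rep; simpl; auto.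
  - rewrite !eval2_app, !eval2_rep. cbn [fst snd].
    rewrite !gpow_inv. rewrite !mulA. rewrite E.
    rewrite <- (mulA (gpow a (S s))), mulrV, mulr1, mulrV. auto.
Qed.
End Free.

Lemma pigeon {T : Type} (f : nat -> T) (l : list T) M :
  (forall n, (n <= M)%nat -> In (f n) l) -> (length l <= M)%nat ->
  exists n1 n2, (n1 < n2 <= M)%nat /\ f n1 = f n2.
Proof.
  intros Hin Hlen. apply NNPP. intro Hn.
  assert (Hinj : forall i j, (i < j <= M)%nat -> f i <> f j).
  { intros i j Hij E. apply Hn. exists i, j. auto. }
  assert (ND : forall a n, (a + n <= S M)%nat -> NoDup (map f (seq a n))).
  { intros a n. revert a. induction n; intros a Ha; simpl. constructor.
    constructor.
    - intro Hi. apply in_map_iff in Hi. destruct Hi as [j [Ej Ij]]. apply in_seq in Ij.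
      apply (Hinj a j). lia. auto.
    - apply IHn. lia. }
  assert (N1 := ND 0%nat (S M) ltac:(lia)).
  assert (Inc : incl (map f (seq 0 (S M))) l).
  { intros z Hz. apply in_map_iff in Hz. destruct Hz as [j [Ej Ij]]. apply in_seq in Ij.
    subst. apply Hin. lia. }
  assert (H := NoDup_incl_length N1 Inc). rewrite length_map, length_seq in H. lia.
Qed.

Section Fin.
Context {G : Grp}.
Local Notation "x ** y" := (@gmul G x y) (at level 40, left associativity).
Local Notation one := (gone G).
Local Notation inv := (@ginv G).

Lemma gpow_inj c i j : (forall n, gpow c (S n) <> one) -> gpow c i = gpow c j -> i = j.
Proof.
  intros Hc E. destruct (Nat.lt_total i j) as [H|[H|H]]; auto; exfalso.
  - replace j with (S (j - i - 1) + i)%nat in E by lia. rewrite gpow_add in E.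
    apply (Hc (j - i - 1)%nat). apply (mul_cancel_r (gpow c i)). rewrite mul1. auto.
  - replace i with (S (i - j - 1) + j)%nat in E by lia. rewrite gpow_add in E.
    apply (Hc (i - j - 1)%nat). apply (mul_cancel_r (gpow c j)). rewrite mul1. auto.
Qed.

Lemma fin1 c (L : list G) : (forall n, gpow c (S n) <> one) ->
  exists M, forall k, In (gpow c k) L -> (k <= M)%nat.
Proof.
  intro Hc. induction L as [|x L IH].
  - exists 0%nat. intros k [].
  - destruct IH as [M HM]. destruct (classic (exists k0, gpow c k0 = x)) as [[k0 Hk0]|Hn].
    + exists (Nat.max k0 M). intros k [Hk|Hk].
      * rewrite <- Hk0 in Hk. apply gpow_inj in Hk; auto. lia.
      * specialize (HM k Hk). lia.
    + exists M. intros k [Hk|Hk]; auto. exfalso; apply Hn; eauto.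
Qed.

Lemma fin2 (Lc L : list G) : exists M, forall c, In c Lc -> (forall n, gpow c (S n) <> one) ->
  forall k, In (gpow c k) L -> (k <= M)%nat.
Proof.
  induction Lc as [|c Lc IH].
  - exists 0%nat. intros c [].
  - destruct IH as [M HM]. destruct (classic (forall n, gpow c (S n) <> one)) as [Hc|Hc].
    + destruct (@fin1 c L Hc) as [M1 HM1]. exists (Nat.max M M1).
      intros c' [E|I] Hc' k Hk.
      * subst c'. specialize (HM1 k Hk). lia.
      * specialize (HM c' I Hc' k Hk). lia.
    + exists M. intros c' [E|I] Hc' k Hk.
      * subst; contradiction.
      * eauto.
Qed.
End Fin.

Section Main.
Context {G : Grp}.
Variable S0 : list G.
Hypothesis gen : generates S0.
Variable D : nat.
Hypothesis hyp : forall w x y z, (Z.min (Pz S0 w x y) (Pz S0 w y z) <= Pz S0 w x z + 2 * Z.of_nat D)%Z.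
Local Notation "x ** y" := (@gmul G x y) (at level 40, left associativity).
Local Notation one := (gone G).
Local Notation inv := (@ginv G).
Local Notation wl := (word_length S0).
Local Notation tl := (transl_length S0).
Local Notation P := (Pz S0).
Local Notation dz := (dz S0).
Local Notation ZD := (Z.of_nat D).

Lemma four w x y z : (P w x y <= P w x z + 2 * ZD \/ P w y z <= P w x z + 2 * ZD)%Z.
Proof. specialize (hyp w x y z). lia. Qed.

Lemma step x0 y z w B :
  (P y x0 z <= B + 2 * ZD)%Z -> (P z y w <= B)%Z -> (2 * dz y z > 2 * B + 4 * ZD)%Z ->
  (P z x0 w <= B + 2 * ZD)%Z.
Proof.
  intros H1 H2 H3.
  assert (I := Pz_ident gen z y x0). rewrite (Pz_sym gen y z x0), (dz_sym gen z y) in I.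
  destruct (four z y x0 w); lia.
Qed.

Lemma chain (x : nat -> G) B :
  (forall i, P (x (S i)) (x i) (x (S (S i))) <= B)%Z ->
  (forall i, 2 * dz (x i) (x (S i)) > 2 * B + 4 * ZD)%Z ->
  forall n, (P (x (S n)) (x 0%nat) (x (S (S n))) <= B + 2 * ZD)%Z.
Proof.
  intros H1 H2 n. induction n.
  - specialize (H1 0%nat). lia.
  - eapply step; eauto.
Qed.

Lemma wl_pow z m : (wl (gpow z m) <= m * wl z)%nat.
Proof. induction m; simpl. rewrite wl_one; auto. assert (H := wl_mul gen z (gpow z m)). lia. Qed.

Lemma dz_pg p g : dz p (p ** g) = Z.of_nat (wl g).
Proof. unfold Defs.carrier in *. unfold Submission.dz, dd. rewrite mulKV. auto. Qed.

Lemma Pz_pg p g : P (p ** g) p (p ** g ** g) = P one (inv g) g.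
Proof. rewrite Pz_base. rewrite invM. rewrite <- !mulA. rewrite mulKV, mulKV, mulV, mulr1. auto. Qed.

Lemma P_ig g : P one (inv g) g = (2 * Z.of_nat (wl g) - Z.of_nat (wl (g ** g)))%Z.
Proof. unfold Pz. rewrite !dz_one, wl_inv; auto. unfold Submission.dz, dd. rewrite invK. lia. Qed.

Lemma uchain g B h :
  (P one (inv g) g <= B)%Z -> (2 * Z.of_nat (wl g) > 2 * B + 4 * ZD)%Z ->
  forall n, (P (h ** gpow g (S n)) h (h ** gpow g (S (S n))) <= B + 2 * ZD)%Z /\
     (dz h (h ** gpow g (S n)) >= Z.of_nat (S n) * Z.of_nat (wl g) - Z.of_nat n * (B + 2 * ZD))%Z.
Proof.
  intros HB Hl.
  set (x := fun i => h ** gpow g i).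
  assert (C := @chain x B).
  assert (E : forall i, x (S i) = x i ** g). { intro i. unfold x. rewrite gpow_S', mulA. auto. }
  assert (H1 : forall i, (P (x (S i)) (x i) (x (S (S i))) <= B)%Z).
  { intro i. rewrite (E (S i)), (E i). rewrite Pz_pg. auto. }
  assert (H2 : forall i, (2 * dz (x i) (x (S i)) > 2 * B + 4 * ZD)%Z).
  { intro i. rewrite E, dz_pg. auto. }
  specialize (C H1 H2).
  assert (x 0%nat = h) by (unfold x; simpl; apply mulr1).
  intro n. split.
  - specialize (C n). unfold x in C. simpl gpow in C at 2. rewrite mulr1 in C. exact C.
  - induction n.
    + change (h ** gpow g 1) with (x 1%nat). rewrite E, <- H, dz_pg. lia.
    + change (h ** gpow g (S (S n))) with (x (S (S n))). change (h ** gpow g (S n)) with (x (S n)) in IHn.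
      specialize (C n). rewrite <- H in *.
      assert (I : P (x (S n)) (x 0%nat) (x (S (S n))) =
         (dz (x (S n)) (x 0%nat) + dz (x (S n)) (x (S (S n))) - dz (x 0%nat) (x (S (S n))))%Z) by reflexivity.
      rewrite (E (S n)), dz_pg in I. rewrite <- (E (S n)) in I. rewrite (dz_sym gen (x (S n))) in I.
      lia.
Qed.

Lemma lemmaD g : (Z.of_nat (wl (g ** g)) <= Z.of_nat (wl g) + Z.of_nat (tl g) + 2 * ZD)%Z.
Proof.
  set (a := Z.of_nat (wl g)). set (b := Z.of_nat (wl (g ** g))). set (t := Z.of_nat (tl g)).
  destruct (Z_le_gt_dec b (a + t + 2 * ZD)) as [ok|bad]; auto. exfalso.
  assert (Hb : (b - a > 2 * ZD)%Z) by lia.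
  destruct (tl_spec S0 g) as [k Hk].
  set (W := wl k).
  set (n := (2 * W + tl g + 1)%nat).
  assert (U1 : (P one (inv g) g <= 2 * a - b)%Z). { rewrite P_ig. unfold a, b. lia. }
  assert (U2 : (2 * Z.of_nat (wl g) > 2 * (2 * a - b) + 4 * ZD)%Z). { unfold a in *. lia. }
  destruct (@uchain g (2 * a - b)%Z one U1 U2 n) as [_ Hd].
  rewrite mul1, dz_one in Hd.
  assert (Eg : gpow g (S n) = inv k ** gpow (k ** g ** inv k) (S n) ** k).
  { rewrite gpow_conj. rewrite <- !mulA. rewrite mulKV, mulV, mulr1. auto. }
  assert (W1 := wl_pow (k ** g ** inv k) (S n)).
  assert (W2 := wl_mul gen (inv k ** gpow (k ** g ** inv k) (S n)) k).
  assert (W3 := wl_mul gen (inv k) (gpow (k ** g ** inv k) (S n))).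
  rewrite wl_inv in W3; auto. rewrite <- Eg in W2. rewrite Hk in W1.
  fold a in Hd.
  assert (Hm : (Z.of_nat n * (b - a - 2 * ZD) >= Z.of_nat n * (t + 1))%Z).
  { apply Z.le_ge, Z.mul_le_mono_nonneg_l; lia. }
  unfold n, t, W in *. nia.
Qed.

Lemma lemmaD_at p g :
  (Z.of_nat (dd S0 p (g ** g ** p)) <= Z.of_nat (dd S0 p (g ** p)) + Z.of_nat (tl g) + 2 * ZD)%Z.
Proof.
  assert (H := lemmaD (inv p ** g ** p)).
  assert (E1 : inv p ** g ** p ** (inv p ** g ** p) = inv p ** (g ** g ** p)).
  { rewrite <- !mulA. rewrite mulVK. auto. }
  rewrite E1 in H. unfold dd.
  assert (E2 : tl (inv p ** g ** p) = tl g).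
  { rewrite <- (tl_conj S0 g (inv p)). rewrite invK. auto. }
  rewrite E2 in H. rewrite <- !mulA in H. rewrite <- !mulA. exact H.
Qed.

Lemma cycmin y : (forall q, (wl y <= wl (q ** y ** inv q))%nat) -> (4 * D + 2 <= wl y)%nat ->
  (2 * Z.of_nat (wl y) <= Z.of_nat (wl (y ** y)) + 4 * ZD)%Z.
Proof.
  intros Hmin HL.
  assert (Hk : (2 * D + 1 <= wl y)%nat) by lia.
  destruct (wl_split gen y Hk) as [p [Hp1 Hp2]].
  assert (M := Hmin (inv p)). rewrite invK in M.
  assert (F1 := four y p one (y ** p)).
  assert (F2 := four one (inv y) y p).
  assert (E : P y one (y ** p) = P one (inv y) p).
  { rewrite Pz_base. rewrite mulr1, mulKV. auto. }
  rewrite P_ig in F2.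
  unfold Pz in F1, F2, E. rewrite E in F1.
  assert (d1 : dz y p = Z.of_nat (wl (inv p ** y))).
  { rewrite dz_sym; auto. }
  assert (d2 : dz y one = Z.of_nat (wl y)).
  { unfold Submission.dz, dd. rewrite mulr1, wl_inv; auto. }
  assert (d3 : dz y (y ** p) = Z.of_nat (wl p)) by apply dz_pg.
  assert (d4 : dz p (y ** p) = Z.of_nat (wl (inv p ** y ** p))).
  { unfold Submission.dz, dd. rewrite mulA. auto. }
  assert (d5 : dz p one = Z.of_nat (wl p)).
  { rewrite dz_sym, dz_one; auto. }
  assert (d6 : dz one y = Z.of_nat (wl y)) by apply dz_one.
  assert (d7 : dz one p = Z.of_nat (wl p)) by apply dz_one.
  assert (d8 : dz one (inv y) = Z.of_nat (wl y)). { rewrite dz_one, wl_inv; auto. }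
  assert (d9 : dz (inv y) p = dz (inv y) p) by reflexivity.
  rewrite ?d1, ?d2, ?d3, ?d4, ?d5 in F1. rewrite ?d6, ?d7, ?d8, ?d1 in F2.
  rewrite ?d6, ?d7, ?d8, ?d1 in E.
  rewrite Hp1, Hp2 in *.
  assert (Hs : dz p y = Z.of_nat (wl (inv p ** y))) by reflexivity.
  rewrite Hp2 in Hs.
  lia.
Qed.

Lemma dz_def x y : dz x y = Z.of_nat (wl (inv x ** y)). Proof. reflexivity. Qed.

Lemma lemL a T : (forall n, gpow a (S n) <> one) -> exists k, (T < tl (gpow a (S k)))%nat.
Proof.
  intro Ha. apply NNPP. intro Hn.
  assert (HT : forall k, (tl (gpow a (S k)) <= T)%nat).
  { intro k. apply Nat.nlt_ge. intro Hk. apply Hn. eauto. }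
  clear Hn.
  set (C1 := (T + 6 * D + 1)%nat). set (C2 := (3 * T + 2 * D)%nat).
  destruct (fin2 (ball S0 C2) (ball S0 C1)) as [M HM].
  set (k := S M). set (g := gpow a k).
  destruct (tl_spec S0 a) as [h Hh].
  assert (Ta : (tl a <= T)%nat). { specialize (HT 0%nat). rewrite gpow1 in HT. auto. }
  set (p := inv h).
  assert (Hpe : (dz p (a ** p) <= Z.of_nat T)%Z).
  { rewrite dz_def. unfold p. rewrite invK, mulA. rewrite Hh. lia. }
  set (e := dz p (a ** p)) in *.
  set (L := wl (inv p ** g ** p)).
  assert (LD := lemmaD_at p g).
  assert (Tg : (tl g <= T)%nat) by apply HT.
  set (t := Nat.div2 L).
  assert (Ht : (2 * t <= L <= 2 * t + 1)%nat).
  { unfold t. destruct (Nat.Even_or_Odd L) as [[q Hq]|[q Hq]]; rewrite Hq.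
    - rewrite Nat.div2_double. lia.
    - replace (2 * q + 1)%nat with (S (2 * q)) by lia. rewrite Nat.div2_succ_double. lia. }
  assert (Htl : (t <= L)%nat) by lia.
  destruct (wl_split gen (inv p ** g ** p) Htl) as [r [Hr1 Hr2]]. fold L in Hr2.
  set (m := p ** r).
  assert (dpm : dz p m = Z.of_nat t). { unfold m. rewrite dz_pg. rewrite Hr1. auto. }
  assert (dmgp : dz m (g ** p) = Z.of_nat (L - t)).
  { rewrite dz_def. unfold m. rewrite invM, <- Hr2. rewrite <- !mulA. auto. }
  assert (dpgp : dz p (g ** p) = Z.of_nat L). { rewrite dz_def. unfold L. rewrite mulA. auto. }
  assert (dpggp : (dz p (g ** g ** p) <= Z.of_nat L + Z.of_nat T + 2 * ZD)%Z).
  { unfold Submission.dz, dd in *. unfold L in *.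
    replace (wl (inv p ** g ** p)) with (wl (inv p ** (g ** p))) by (rewrite mulA; auto). lia. }
  assert (Hi : (dz m (g ** m) <= Z.of_nat C1)%Z).
  { assert (F1 := four (g ** p) m p (g ** m)).
    assert (F2 := four (g ** p) p (g ** g ** p) (g ** m)).
    unfold Pz in F1, F2.
    assert (E1 : dz (g ** p) (g ** m) = Z.of_nat t) by (rewrite dz_tr; auto).
    assert (E2 : dz (g ** g ** p) (g ** m) = Z.of_nat (L - t)).
    { rewrite <- mulA, dz_tr, dz_sym; auto. }
    assert (E3 : dz (g ** p) (g ** g ** p) = Z.of_nat L).
    { rewrite <- mulA, dz_tr; auto. }
    assert (s1 := dz_sym gen (g ** p) m). assert (s2 := dz_sym gen (g ** p) p).
    assert (s3 := dz_sym gen m p). assert (s4 := dz_sym gen p (g ** m)).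
    assert (s5 := dz_sym gen (g ** g ** p) (g ** m)). assert (s6 := dz_sym gen (g ** p) (g ** m)).
    assert (s7 := dz_sym gen p (g ** g ** p)). assert (s8 := dz_sym gen m (g ** m)).
    unfold C1. lia. }
  assert (Hii : (dz m (a ** m) <= Z.of_nat C2)%Z).
  { assert (F := four p m (g ** p) (a ** m)). unfold Pz in F.
    assert (Ecomm : a ** g = g ** a). { unfold g, k. rewrite gpow_comm. auto. }
    assert (T1 := dz_tri gen (a ** p) p (a ** m)).
    assert (E1 : dz (a ** p) (a ** m) = Z.of_nat t) by (rewrite dz_tr; auto).
    assert (T2 := dz_tri gen p (a ** p) (a ** m)).
    assert (T3 := dz_tri gen (g ** p) (a ** g ** p) (a ** m)).
    assert (E2 : dz (g ** p) (a ** g ** p) = e).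
    { rewrite Ecomm, <- mulA, dz_tr. auto. }
    assert (E3 : dz (a ** g ** p) (a ** m) = Z.of_nat (L - t)).
    { rewrite <- mulA, dz_tr, dz_sym; auto. }
    rewrite (dz_sym gen (a ** p) p) in T1. fold e in T1.
    rewrite (dz_sym gen m (g ** p)) in *.
    unfold C2. lia. }
  set (c := inv m ** a ** m).
  assert (Hc : forall n, gpow c (S n) <> one).
  { intros n E. unfold c in E. rewrite <- (invK m) in E at 2. rewrite gpow_conj in E.
    apply (Ha n). apply (mul_cancel_l (inv m)). apply (mul_cancel_r (inv (inv m))).
    rewrite E. rewrite mulr1, mulrV. auto. }
  assert (Inc : In c (ball S0 C2)).
  { apply in_ball; auto. unfold c. rewrite <- mulA. rewrite dz_def in Hii. lia. }
  assert (Inck : In (gpow c k) (ball S0 C1)).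
  { apply in_ball; auto. unfold c. rewrite <- (invK m) at 2. rewrite gpow_conj. rewrite invK.
    fold g. rewrite <- mulA. rewrite dz_def in Hi. lia. }
  specialize (HM c Inc Hc k Inck). unfold k in HM. lia.
Qed.

Lemma gpow_split y n N : (n <= N)%nat -> gpow y N = gpow y n ** gpow y (N - n).
Proof. intro H. rewrite <- gpow_add. f_equal. lia. Qed.

Lemma fellow y : (P one (inv y) y <= 4 * ZD)%Z -> (8 * D + 3 <= wl y)%nat ->
  forall n N, (n <= N)%nat -> (P (gpow y n) one (gpow y N) <= 8 * ZD)%Z.
Proof.
  intros HB HL n N HnN.
  destruct (Nat.eq_dec n 0) as [E|Hn0].
  { subst. change (gpow y 0) with one. rewrite Pz_self by auto. lia. }
  destruct (Nat.eq_dec n N) as [E|HnN'].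
  { subst. rewrite Pz_self2 by auto. lia. }
  assert (Hl : (2 * Z.of_nat (wl y) > 2 * (4 * ZD) + 4 * ZD)%Z) by lia.
  assert (Fw : (P (gpow y n) one (gpow y (S n)) <= 6 * ZD)%Z).
  { destruct (uchain y one HB Hl (n - 1)) as [U _].
    replace (S (n - 1)) with n in U by lia. rewrite !mul1 in U. lia. }
  assert (Rv : (P (gpow y (S n)) (gpow y N) (gpow y n) <= 6 * ZD)%Z).
  { destruct (Nat.eq_dec (S n) N) as [E|HSn].
    - subst. rewrite Pz_self by auto. lia.
    - assert (HB' : (P one (inv (inv y)) (inv y) <= 4 * ZD)%Z).
      { rewrite invK, Pz_sym; auto. }
      assert (Hl' : (2 * Z.of_nat (wl (inv y)) > 2 * (4 * ZD) + 4 * ZD)%Z).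
      { rewrite wl_inv; auto. }
      destruct (uchain (inv y) (gpow y N) HB' Hl' (N - n - 2)) as [U _].
      replace (S (N - n - 2)) with (N - S n)%nat in U by lia.
      replace (S (N - S n)) with (N - n)%nat in U by lia.
      rewrite !gpow_inv in U.
      assert (e1 : gpow y N = gpow y (S n) ** gpow y (N - S n)) by (apply gpow_split; lia).
      assert (e2 : gpow y N = gpow y n ** gpow y (N - n)) by (apply gpow_split; lia).
      assert (q1 : gpow y N ** inv (gpow y (N - S n)) = gpow y (S n)) by (rewrite e1; apply mulKr).
      assert (q2 : gpow y N ** inv (gpow y (N - n)) = gpow y n) by (rewrite e2; apply mulKr).
      rewrite q1, q2 in U. lia. }
  assert (F := four (gpow y n) one (gpow y N) (gpow y (S n))).
  assert (I := Pz_ident gen (gpow y n) (gpow y (S n)) (gpow y N)).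
  rewrite (Pz_sym gen (gpow y (S n)) (gpow y n) (gpow y N)) in I.
  assert (dL : dz (gpow y n) (gpow y (S n)) = Z.of_nat (wl y)).
  { rewrite gpow_S'. apply dz_pg. }
  rewrite (Pz_sym gen (gpow y n) (gpow y (S n)) (gpow y N)) in I.
  assert (s1 := Pz_sym gen (gpow y n) (gpow y N) (gpow y (S n))).
  lia.
Qed.

Lemma powlen y : (P one (inv y) y <= 4 * ZD)%Z -> (8 * D + 3 <= wl y)%nat ->
  forall n, (S n <= wl (gpow y (S n)))%nat.
Proof.
  intros HB HL n.
  assert (Hl : (2 * Z.of_nat (wl y) > 2 * (4 * ZD) + 4 * ZD)%Z) by lia.
  destruct (uchain y one HB Hl n) as [_ U]. rewrite mul1, dz_one in U.
  assert (Z.of_nat (S n) * Z.of_nat (wl y) - Z.of_nat n * (4 * ZD + 2 * ZD) >= Z.of_nat (S n))%Z.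
  { rewrite Nat2Z.inj_succ. nia. }
  lia.
Qed.

Lemma same_sign y u U' N :
  (P one (inv y) y <= 4 * ZD)%Z -> (8 * D + 3 <= wl y)%nat -> (wl u <= U')%nat ->
  (2 * Z.of_nat (wl y * length (ball S0 (3 * U' + 12 * D))) <=
     P one (gpow y N) (u ** gpow y N))%Z ->
  exists s, gpow y (S s) ** u = u ** gpow y (S s).
Proof.
  intros HB HL Hu HP.
  set (K := (3 * U' + 12 * D)%nat) in *. set (nm := length (ball S0 K)) in *.
  set (L := wl y) in *. set (v := gpow y N) in *.
  assert (HnN : (nm <= N)%nat).
  { assert (A1 := Pz_le gen one v (u ** v)). rewrite dz_one in A1.
    assert (A2 := wl_pow y N). fold v L in A2. nia. }
  assert (Hc : forall n, (n <= nm)%nat -> In (inv (gpow y n) ** u ** gpow y n) (ball S0 K)).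
  { intros n Hn. apply in_ball; auto.
    set (w := gpow y n).
    assert (E : wl (inv w ** u ** w) = wl (inv w ** (u ** w))) by (rewrite mulA; auto).
    rewrite E. apply Nat2Z.inj_le.
    assert (Hfw := fellow y HB HL (n:=n) (N:=N) ltac:(lia)). fold w v in Hfw.
    assert (Hw : (wl w <= n * L)%nat) by apply wl_pow.
    assert (Hw2 : (n * L <= nm * L)%nat) by nia.
    assert (F1 := four one w v (u ** w)).
    assert (F2 := four one v (u ** v) (u ** w)).
    assert (BC := Pz_bc gen u one (u ** v) (u ** w)). rewrite (dz_sym gen u one) in BC.
    assert (Tr : P u (u ** v) (u ** w) = P one v w).
    { rewrite <- (Pz_tr S0 u one v w). rewrite mulr1. auto. }
    assert (I := Pz_ident gen one w v).
    assert (s1 := Pz_sym gen one v w).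
    assert (dw : dz one w = Z.of_nat (wl w)) by apply dz_one.
    assert (du : dz one u = Z.of_nat (wl u)) by apply dz_one.
    assert (duw : (dz one (u ** w) <= Z.of_nat (wl u) + Z.of_nat (wl w))%Z).
    { rewrite dz_one. assert (H := wl_mul gen u w). lia. }
    assert (Def : P one w (u ** w) = (dz one w + dz one (u ** w) - dz w (u ** w))%Z) by reflexivity.
    assert (Dw : dz w (u ** w) = Z.of_nat (wl (inv w ** (u ** w)))) by reflexivity.
    assert (Hm : (Z.of_nat (wl w) <= Z.of_nat (L * nm))%Z) by lia.
    unfold K. lia. }
  destruct (@pigeon G (fun n => inv (gpow y n) ** u ** gpow y n) (ball S0 K) nm Hc (le_n _)) as [n1 [n2 [Hn E]]].
  exists (n2 - n1 - 1)%nat. replace (S (n2 - n1 - 1)) with (n2 - n1)%nat by lia.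
  set (Y := gpow y (n2 - n1)). set (A := gpow y n1).
  assert (E2 : gpow y n2 = Y ** A). { unfold Y, A. rewrite <- gpow_add. f_equal. lia. }
  rewrite E2 in E. fold A in E. rewrite invM in E.
  rewrite <- !mulA in E. apply mul_cancel_l in E.
  rewrite !mulA in E. apply mul_cancel_r in E.
  rewrite E at 1. rewrite <- !mulA. rewrite mulVK. auto.
Qed.

Definition ys (y : G) (s : bool) := if s then y else inv y.

Lemma choose_j y x N :
  (forall s, P one (inv (ys y s)) (ys y s) <= 4 * ZD)%Z -> (8 * D + 3 <= wl y)%nat ->
  (forall s n d, (1 <= d)%nat -> gpow (ys y s) (S n) ** gpow x d <> gpow x d ** gpow (ys y s) (S n)) ->
  exists j, (1 <= j <= 5)%nat /\ forall s1 s2,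
    (P one (gpow (ys y s1) N) (gpow x j ** gpow (ys y s2) N) <
      2 * Z.of_nat (wl y * length (ball S0 (3 * (4 * wl x) + 12 * D))) + 2 * ZD + 10 * Z.of_nat (wl x))%Z.
Proof.
  intros HB HL NC.
  set (U := wl x) in *. set (R := (2 * Z.of_nat (wl y * length (ball S0 (3 * (4 * U) + 12 * D))) + 2 * ZD + 10 * Z.of_nat U)%Z).
  set (bad := fun j (t : bool * bool) => (R <= P one (gpow (ys y (fst t)) N) (gpow x j ** gpow (ys y (snd t)) N))%Z).
  apply NNPP. intro Hn.
  assert (Hb : forall i, (i <= 4)%nat -> exists t, bad (S i) t).
  { intros i Hi. apply NNPP. intro Hno. apply Hn. exists (S i). split. lia.
    intros s1 s2. apply Z.nle_gt. intro Hle. apply Hno. exists (s1, s2). exact Hle. }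
  set (f := fun i => epsilon (inhabits (true, true)) (fun t => bad (S i) t)).
  assert (Hf : forall i, (i <= 4)%nat -> bad (S i) (f i)).
  { intros i Hi. unfold f. apply epsilon_spec. auto. }
  assert (Hin : forall i, (i <= 4)%nat -> In (f i) ((true,true)::(true,false)::(false,true)::(false,false)::nil)).
  { intros i _. destruct (f i) as [[] []]; simpl; tauto. }
  destruct (@pigeon _ f _ 4 Hin (le_n _)) as [i1 [i2 [Hi E]]].
  assert (B1 := Hf i1 ltac:(lia)). assert (B2 := Hf i2 ltac:(lia)). rewrite <- E in B2.
  destruct (f i1) as [s1 s2]. unfold bad in B1, B2. cbn [fst snd] in B1, B2.
  set (e := gpow (ys y s1) N) in *. set (v := gpow (ys y s2) N) in *.
  set (d := (i2 - i1)%nat).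
  set (X1 := gpow x (S i1) ** v) in *. set (X2 := gpow x (S i2) ** v) in *.
  assert (F := four one X1 e X2).
  assert (s := Pz_sym gen one X1 e).
  assert (BC := Pz_bc gen one (gpow x (S i1)) X1 X2).
  rewrite dz_one in BC.
  assert (W1 := wl_pow x (S i1)). fold U in W1.
  assert (Tr : P (gpow x (S i1)) X1 X2 = P one v (gpow x d ** v)).
  { rewrite Pz_base. unfold X1, X2. rewrite mulKV.
    replace (S i2) with (S i1 + d)%nat by (unfold d; lia). rewrite gpow_add, <- mulA, mulKV. auto. }
  assert (HBs := HB s2).
  assert (HLs : (8 * D + 3 <= wl (ys y s2))%nat).
  { destruct s2; simpl; [|rewrite wl_inv; auto]; lia. }
  assert (Wd : (wl (gpow x d) <= 4 * U)%nat).
  { assert (H := wl_pow x d). fold U in H. unfold d in *. nia. }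
  destruct (@same_sign (ys y s2) (gpow x d) (4 * U)%nat N HBs HLs Wd) as [sn Hsn].
  { assert (Ew : wl (ys y s2) = wl y) by (destruct s2; simpl; [|rewrite wl_inv]; auto).
    rewrite Ew. fold v. unfold R in *. nia. }
  apply (NC s2 sn d). unfold d; lia. exact Hsn.
Qed.

Lemma goodchain b g (Pd : Z) :
  (P one (inv b) g <= Pd)%Z -> (P one (inv g) b <= Pd)%Z ->
  (2 * Z.of_nat (wl b) > 2 * Pd + 4 * ZD)%Z -> (2 * Z.of_nat (wl g) > 2 * Pd + 4 * ZD)%Z ->
  (Z.of_nat (wl g) <= Z.of_nat (tl (b ** g)) + 3 * Pd + 6 * ZD)%Z.
Proof.
  intros H1 H2 Hb Hg.
  assert (p1 : P b one (b ** g) = P one (inv b) g).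
  { rewrite Pz_base. rewrite mulr1, mulKV. auto. }
  assert (p2 : P (b ** g) b (b ** g ** b) = P one (inv g) b).
  { rewrite Pz_base. rewrite mulKV. f_equal. rewrite invM, <- mulA, mulV, mulr1. auto. }
  assert (p3 : P (b ** g ** b) (b ** g) (b ** g ** b ** g) = P one (inv b) g).
  { rewrite Pz_base. rewrite mulKV. f_equal. rewrite invM, <- mulA, mulV, mulr1. auto. }
  assert (d1 : dz b (b ** g) = Z.of_nat (wl g)) by apply dz_pg.
  assert (d2 : dz (b ** g) (b ** g ** b) = Z.of_nat (wl b)) by apply dz_pg.
  assert (d3 : dz (b ** g ** b) (b ** g ** b ** g) = Z.of_nat (wl g)) by apply dz_pg.
  assert (d0 : dz one b = Z.of_nat (wl b)) by apply dz_one.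
  assert (S1 : (P (b ** g) one (b ** g ** b) <= Pd + 2 * ZD)%Z).
  { apply (step one b (b ** g) (b ** g ** b)); lia. }
  assert (S2 : (P (b ** g ** b) one (b ** g ** b ** g) <= Pd + 2 * ZD)%Z).
  { apply (step one (b ** g) (b ** g ** b) (b ** g ** b ** g)); lia. }
  assert (i1 : P b one (b ** g) = (dz b one + dz b (b ** g) - dz one (b ** g))%Z) by reflexivity.
  assert (i2 : P (b ** g) one (b ** g ** b) = (dz (b ** g) one + dz (b ** g) (b ** g ** b) - dz one (b ** g ** b))%Z) by reflexivity.
  assert (i3 : P (b ** g ** b) one (b ** g ** b ** g) = (dz (b ** g ** b) one + dz (b ** g ** b) (b ** g ** b ** g) - dz one (b ** g ** b ** g))%Z) by reflexivity.
  rewrite (dz_sym gen b one), (dz_sym gen (b ** g) one), (dz_sym gen (b ** g ** b) one) in *.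
  assert (LD := lemmaD (b ** g)).
  rewrite mulA in LD.
  assert (e1 := dz_one S0 (b ** g ** b ** g)). assert (e2 := dz_one S0 (b ** g)).
  assert (Wm := wl_mul gen b g).
  lia.
Qed.
Lemma core b1 b2 (Qd : nat) :
  (forall e1 e2, (e1 = b1 \/ e1 = inv b1) -> (e2 = b2 \/ e2 = inv b2) -> (P one e1 e2 <= Z.of_nat Qd)%Z) ->
  (Qd + 6 * D + 1 < wl b1)%nat -> (Qd + 6 * D + 1 < wl b2)%nat ->
  forall g, (wl g <= 3 * Nat.max (tl g) (Nat.max (tl (b1 ** g)) (tl (b2 ** g))) + (5 * (Qd + 4 * D + 1) + 8 * D))%nat.
Proof.
  intros HQ Hb1 Hb2 g.
  set (Mx := Nat.max (tl g) (Nat.max (tl (b1 ** g)) (tl (b2 ** g)))).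
  assert (M0 : (tl g <= Mx)%nat) by (unfold Mx; lia).
  assert (M1 : (tl (b1 ** g) <= Mx)%nat) by (unfold Mx; lia).
  assert (M2 : (tl (b2 ** g) <= Mx)%nat) by (unfold Mx; lia).
  set (Pd := (Z.of_nat Qd + 4 * ZD + 1)%Z).
  apply Nat2Z.inj_le. rewrite Nat2Z.inj_add, Nat2Z.inj_mul.
  assert (LD := lemmaD g).
  assert (c2 := P_ig g).
  set (c := P one (inv g) g) in *.
  destruct (Z_le_gt_dec (3 * c) (2 * Z.of_nat (wl g))) as [C|C].
  { lia. }
  destruct (Z_le_gt_dec (Z.of_nat (wl g)) (2 * Pd + 2 * ZD)) as [C'|C'].
  { lia. }
  assert (Hc : (Pd <= c)%Z) by lia.
  (* each b is good or has a direction close to g *)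
  assert (GB : forall b, (P one (inv b) g <= Pd /\ P one (inv g) b <= Pd)%Z \/
             exists e, (e = b \/ e = inv b) /\ (Pd - 2 * ZD <= P one e g)%Z).
  { intro b. destruct (Z_le_gt_dec (P one (inv b) g) Pd) as [h1|h1].
    - destruct (Z_le_gt_dec (P one (inv g) b) Pd) as [h2|h2].
      + left; auto.
      + right. exists b. split; auto.
        assert (F := four one b (inv g) g). rewrite (Pz_sym gen one b (inv g)) in F. fold c in F. lia.
    - right. exists (inv b). split; auto. lia. }
  destruct (GB b1) as [G1|[e1 [He1 E1]]].
  - destruct G1 as [G1a G1b].
    assert (H := goodchain b1 g G1a G1b ltac:(lia) ltac:(lia)). lia.
  - destruct (GB b2) as [G2|[e2 [He2 E2]]].
    + destruct G2 as [G2a G2b].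
      assert (H := goodchain b2 g G2a G2b ltac:(lia) ltac:(lia)). lia.
    + exfalso. assert (F := four one e1 g e2). rewrite (Pz_sym gen one g e2) in F.
      assert (Q := HQ e1 e2 He1 He2). lia.
Qed.

Lemma comm_inv z x : inv z ** x = x ** inv z -> z ** x = x ** z.
Proof.
  intro E. rewrite <- (mulKrV (z ** x) z). rewrite <- (mulA z x (inv z)). rewrite <- E.
  rewrite mulVK. reflexivity.
Qed.

Lemma subgroup_pow (A : G -> Prop) z n : is_subgroup A -> A z -> A (gpow z n).
Proof. intros [H1 [H2 H3]] Hz. induction n; simpl; auto. Qed.

Lemma main_sec (A : G -> Prop) : is_subgroup A -> contains_free_rank2 A ->
  exists alpha : nat, exists a1 a2, A a1 /\ A a2 /\ forall g,
    (wl g <= 3 * Nat.max (tl g) (Nat.max (tl (a1 ** g)) (tl (a2 ** g))) + alpha)%nat.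
Proof.
  intros HA [a [b [Aa [Ab F]]]].
  assert (Ha := free_pow F).
  destruct (lemL a (8 * D + 2) Ha) as [k0 Hk0].
  set (a' := gpow a (S k0)) in *.
  destruct (tl_spec S0 a') as [h0 Hh0].
  set (y := h0 ** a' ** inv h0) in *.
  assert (Hmin : forall q, (wl y <= wl (q ** y ** inv q))%nat).
  { intro q. rewrite Hh0. assert (H := tl_le S0 a' (q ** h0)).
    replace (q ** y ** inv q) with (q ** h0 ** a' ** inv (q ** h0)); auto.
    unfold y. rewrite invM. rewrite <- !mulA. auto. }
  assert (HL : (8 * D + 3 <= wl y)%nat) by lia.
  assert (CM := cycmin y Hmin ltac:(lia)).
  assert (HB : forall s, (P one (inv (ys y s)) (ys y s) <= 4 * ZD)%Z).
  { assert (H0 : (P one (inv y) y <= 4 * ZD)%Z) by (rewrite P_ig; auto; lia).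
    intros []; simpl; auto. rewrite invK, Pz_sym; auto. }
  set (x := h0 ** b ** inv h0).
  assert (NC : forall s n d, (1 <= d)%nat ->
     gpow (ys y s) (S n) ** gpow x d <> gpow x d ** gpow (ys y s) (S n)).
  { assert (NC1 : forall n d, (1 <= d)%nat -> gpow y (S n) ** gpow x d <> gpow x d ** gpow y (S n)).
    { intros n d Hd E. unfold y, x in E. rewrite !gpow_conj in E.
      rewrite <- !mulA in E. rewrite !mulKV in E. rewrite !mulA in E.
      apply mul_cancel_r in E. rewrite <- !mulA in E. apply mul_cancel_l in E.
      unfold a' in E. rewrite <- gpow_mul in E.
      replace (S k0 * S n)%nat with (S (k0 + n + k0 * n))%nat in E by lia.
      replace d with (S (d - 1)) in E by lia.
      apply (free_comm F (d - 1) (k0 + n + k0 * n)). auto. }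
    intros [] n d Hd E; simpl in E.
    - exact (NC1 n d Hd E).
    - apply (NC1 n d Hd). apply comm_inv. rewrite <- gpow_inv. auto. }
  set (U := wl x).
  set (R := (2 * (wl y * length (ball S0 (3 * (4 * U) + 12 * D))) + 2 * D + 10 * U)%nat).
  set (Qd := (R + 10 * U)%nat).
  set (N := (Qd + 6 * D + 10 * U + 2)%nat).
  destruct (choose_j y x N HB HL NC) as [j [Hj Hgood]].
  fold U in Hgood.
  set (X := gpow x j).
  set (b1 := gpow y N). set (b2 := X ** gpow y N ** inv X).
  assert (WX : (wl X <= 5 * U)%nat). { assert (H := wl_pow x j). fold X U in H. nia. }
  assert (Wb1 : (N <= wl b1)%nat).
  { unfold b1. replace N with (S (N - 1)) at 2 by (unfold N; lia).
    assert (H := powlen y (HB true) HL (N - 1)). unfold N in *. lia. }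
  assert (Wb2 : (wl b1 <= wl X + wl b2 + wl X)%nat).
  { replace b1 with (inv X ** b2 ** X).
    - assert (H1 := wl_mul gen (inv X ** b2) X). assert (H2 := wl_mul gen (inv X) b2).
      rewrite wl_inv in H2; auto. lia.
    - unfold b2. rewrite <- !mulA. rewrite mulKV, mulV, mulr1. auto. }
  assert (Cross : forall e1 e2, (e1 = b1 \/ e1 = inv b1) -> (e2 = b2 \/ e2 = inv b2) ->
     (P one e1 e2 <= Z.of_nat Qd)%Z).
  { intros e1 e2 He1 He2.
    assert (Ee1 : exists s1, e1 = gpow (ys y s1) N).
    { destruct He1 as [->| ->]; [exists true | exists false]; simpl; auto.
      unfold b1. rewrite gpow_inv. auto. }
    assert (Ee2 : exists s2, e2 = X ** gpow (ys y s2) N ** inv X).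
    { destruct He2 as [->| ->]; [exists true | exists false]; simpl; auto.
      unfold b2. rewrite !invM, invK, gpow_inv. rewrite !mulA. auto. }
    destruct Ee1 as [s1 ->]. destruct Ee2 as [s2 ->].
    assert (H := Hgood s1 s2). fold X in H.
    assert (Lp := Pz_lip gen one (gpow (ys y s1) N) (X ** gpow (ys y s2) N ** inv X) (X ** gpow (ys y s2) N)).
    rewrite (dz_sym gen), dz_pg, wl_inv in Lp; auto.
    unfold Qd, R. rewrite !Nat2Z.inj_add, !Nat2Z.inj_mul. lia. }
  assert (Core := @core b1 b2 Qd Cross ltac:(unfold N in *; lia) ltac:(unfold N in *; lia)).
  set (a1 := gpow a' N). set (a2 := gpow b j ** a1 ** inv (gpow b j)).
  exists (5 * (Qd + 4 * D + 1) + 8 * D + 2 * wl h0)%nat, a1, a2.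
  destruct HA as [HA1 [HA2 HA3]].
  assert (Aa' : A a') by (apply subgroup_pow; auto; split; auto).
  assert (Aa1 : A a1) by (apply subgroup_pow; auto; split; auto).
  assert (Abj : A (gpow b j)) by (apply subgroup_pow; auto; split; auto).
  split; [auto|]. split; [unfold a2; auto|].
  intro g.
  set (g0 := h0 ** g ** inv h0).
  assert (Eb1 : b1 = h0 ** a1 ** inv h0). { unfold b1, y, a1. apply gpow_conj. }
  assert (Eb2 : b2 = h0 ** a2 ** inv h0).
  { unfold b2, X, x, a2. fold b1. rewrite Eb1, gpow_conj. rewrite !invM, !invK. rewrite <- !mulA.
    rewrite !mulKV. auto. }
  assert (T0 : tl g0 = tl g) by apply tl_conj.
  assert (T1 : tl (b1 ** g0) = tl (a1 ** g)).
  { rewrite <- (tl_conj S0 (a1 ** g) h0). f_equal. unfold g0. rewrite Eb1. rewrite <- !mulA. rewrite mulKV. auto. }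
  assert (T2 : tl (b2 ** g0) = tl (a2 ** g)).
  { rewrite <- (tl_conj S0 (a2 ** g) h0). f_equal. unfold g0. rewrite Eb2. rewrite <- !mulA. rewrite mulKV. auto. }
  assert (Wg : (wl g <= wl h0 + wl g0 + wl h0)%nat).
  { replace g with (inv h0 ** g0 ** h0).
    - assert (H1 := wl_mul gen (inv h0 ** g0) h0). assert (H2 := wl_mul gen (inv h0) g0).
      rewrite wl_inv in H2; auto. lia.
    - unfold g0. rewrite <- !mulA. rewrite mulKV, mulV, mulr1. auto. }
  assert (C := Core g0). rewrite T0, T1, T2 in C. lia.
Qed.

End Main.
Unset Implicit Arguments.
Open Scope R_scope.

Lemma Rmax_INR m n : Rmax (INR m) (INR n) = INR (Nat.max m n).
Proof.
  unfold Rmax. destruct (Rle_dec (INR m) (INR n)) as [H|H].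
  - apply INR_le in H. rewrite Nat.max_r; auto.
  - assert (n <= m)%nat. { apply INR_le. lra. } rewrite Nat.max_l; auto.
Qed.

Theorem mainTheorem11 (G : Grp) (S : list G) :
  generates S -> hyperbolic_wrt S ->
  forall A : G -> Prop, is_subgroup A -> contains_free_rank2 A ->
  exists alpha : R, 0 <= alpha /\
  exists a1 a2 : G, A a1 /\ A a2 /\
  forall g : G,
    INR (word_length S g) <=
      3 * Rmax (INR (transl_length S g))
               (Rmax (INR (transl_length S (gmul a1 g)))
                     (INR (transl_length S (gmul a2 g)))) + alpha.
Proof.
  intros gen hw A HA HF.
  destruct (hyp_int hw) as [D hyp].
  destruct (@main_sec G S gen D hyp A HA HF) as [alpha [a1 [a2 [A1 [A2 H]]]]].
  exists (INR alpha). split. apply pos_INR.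
  exists a1, a2. split; auto. split; auto. intro g.
  rewrite !Rmax_INR. specialize (H g). apply le_INR in H.
  rewrite plus_INR, mult_INR in H. simpl (INR 3) in H. lra.
Qed.
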